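(* When the weighted GK algorithm described in the context is run, after the deletion step performed once $k$ updates have been seen, the number of type-2 elements stored in WQS is $O(\ell\log t_k)$.
   Context: A weighted stream consists of updates $(x_i,w(x_i))$, $i=1,2,\dots$, with $x_i$ from a totally ordered universe and $w(x_i)$ a positive integer. Let $W_k=\sum_{i=1}^k w(x_i)$, $\ell=1/\varepsilon$, $t_k=\lfloor\varepsilon W_k\rfloor$, and $t_0(x_k)=\lfloor\varepsilon(W_{k-1}+1)\rfloor$. The summary WQS stores elements $e_1<\dots<e_s$ of the stream with weights $w(e)$ and integers $\mathrm{rmin}(e),\mathrm{rmax}(e)$; a sentinel $e_0$ has $\mathrm{rmin}(e_0)=\mathrm{rmax}(e_0)=0$, $w(e_0)=1$; an element $+\infty$, larger than all others, is inserted at the start of the stream and always stored as $e_s$. Insert$(x,w(x))$: store $x$; let $e_i$ be the smallest stored element with $e_i>x$; set $\mathrm{rmin}(x)=\mathrm{rmin}(e_{i-1})+w(e_{i-1})$, $\mathrm{rmax}(x)=\mathrm{rmax}(e_i)$, and increase $\mathrm{rmin}(e_j),\mathrm{rmax}(e_j)$ by $w(x)$ for all $j\ge i$. Delete$(e_i)$: remove $e_i$, leaving other values unchanged. Define $g_i=\mathrm{rmin}(e_i)-(\mathrm{rmin}(e_{i-1})+w(e_{i-1})-1)$, $\Delta_i=\mathrm{rmax}(e_i)-\mathrm{rmin}(e_i)$, $G_i=g_i+w(e_i)-1$. Band values: after $k$ updates, $\mathbf{v}(x)=0$ if $t_k=t_0(x)$, and otherwise $\mathbf{v}(x)$ is the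 unique integer $\alpha\ge1$ with $2^{\alpha-1}+(t_k\bmod 2^{\alpha-1})\le t_k-t_0(x)<2^{\alpha}+(t_k\bmod 2^{\alpha})$. The segment $\mathrm{seg}(e_i)$ is the maximal set of consecutive stored elements $e_j,\dots,e_{i-1}$ all with band value strictly less than $\mathbf{v}(e_i)$; $G^*_i=G_i+\sum_{e_k\in\mathrm{seg}(e_i)}G_k$. Weighted GK algorithm: for each arriving update $(x_j,w(x_j))$: (i) run Insert$(x_j,w(x_j))$; (ii) (deletion step) while there is a stored $e_i$ ($1\le i<s$) with $\mathbf{v}(e_i)\le\mathbf{v}(e_{i+1})$ and $G^*_i+g_{i+1}+\Delta_{i+1}\le t_j$, run Delete on $e_i$ and on every element of $\mathrm{seg}(e_i)$. After the deletion step once $k$ updates have been seen, a stored element $e_i$ ($1\le i<s$) is type-1 if $\mathbf{v}(e_i)>\mathbf{v}(e_{i+1})$, and type-2 if it is not type-1 (in which case $G^*_i+g_{i+1}+\Delta_{i+1}>t_k$). *)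

(* Defs.v *)
From mathcomp Require Import all_boot all_order all_algebra.
Set Implicit Arguments. Unset Strict Implicit. Unset Printing Implicit Defensive.
Import Order.TTheory GRing.Theory Num.Theory.

(* Band values.  For the current threshold t (= t_k) and the arrival     *)
(* threshold t0 (= t_0(x)), band t t0 = 0 if t = t0, and otherwise the   *)
(* unique alpha >= 1 with                                                *)
(*   2^(alpha-1) + (t mod 2^(alpha-1)) <= t - t0 < 2^alpha + (t mod 2^alpha). *)
(* The intervals partition [1, oo), so the first such alpha (searched    *)
(* among 1 .. t - t0, which always contains it) is that unique alpha.    *)
Definition band_cond (t d a : nat) : bool :=
  (2 ^ a + t %% 2 ^ a <= d) && (d < 2 ^ a.+1 + t %% 2 ^ a.+1).

Definition band (t t0 : nat) : nat :=
  if t == t0 then 0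
  else (find (band_cond t (t - t0)) (iota 0 (t - t0))).+1.

(* Stored elements of WQS.  ekey = None encodes the element +oo.        *)
Section WQS.
Context {disp : Order.disp_t} {T : orderType disp}.

Record entry := Entry {
  ekey : option T;
  ew : nat;
  ermin : nat;
  ermax : nat;
  et0 : nat
}.

Definition dentry : entry := Entry None 1 0 0 0.

(* A summary is the list [e_1; ...; e_s] of stored elements, in         *)
(* increasing order; list position p (0-based) holds e_(p+1).  The      *)
(* sentinel e_0 (rmin = rmax = 0, w = 1) is implicit.                  *)
Definition summary := seq entry.

Definition ent (s : summary) (p : nat) : entry := nth dentry s p.

Definition prev_end (s : summary) (p : nat) : int :=
  if p is p'.+1 then ((ermin (ent s p'))%:Z + (ew (ent s p'))%:Z - 1)%R
  else (0 + 1 - 1)%R.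

Definition gval (s : summary) (p : nat) : int :=
  ((ermin (ent s p))%:Z - prev_end s p)%R.

Definition Dval (s : summary) (p : nat) : int :=
  ((ermax (ent s p))%:Z - (ermin (ent s p))%:Z)%R.

Definition Gval (s : summary) (p : nat) : int :=
  (gval s p + (ew (ent s p))%:Z - 1)%R.

Definition vband (t : nat) (s : summary) (p : nat) : nat :=
  band t (et0 (ent s p)).

(* Length of seg(e): the maximal run of stored elements immediately    *)
(* preceding position p whose band values are < the band value at p.   *)
Definition seglen (t : nat) (s : summary) (p : nat) : nat :=
  find (fun e => ~~ (band t (et0 e) < vband t s p)) (rev (take p s)).

Definition Gstar (t : nat) (s : summary) (p : nat) : int :=
  (Gval s p + \sum_(p - seglen t s p <= q < p) Gval s q)%R.

Definition deletable (t : nat) (s : summary) (p : nat) : bool :=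
  [&& p.+1 < size s,
      vband t s p <= vband t s p.+1 &
      (Gstar t s p + gval s p.+1 + Dval s p.+1 <= t%:Z)%R].

Definition delete_seg (t : nat) (s : summary) (p : nat) : summary :=
  take (p - seglen t s p) s ++ drop p.+1 s.

Definition key_gt (x : T) (e : entry) : bool :=
  if ekey e is Some y then (x < y)%O else true.

Definition bump (wx : nat) (e : entry) : entry :=
  Entry (ekey e) (ew e) (ermin e + wx) (ermax e + wx) (et0 e).

Definition insert (s : summary) (x : T) (wx t0x : nat) : summary :=
  let p := find (key_gt x) s in
  let newe := Entry (Some x) wx
                (if p is p'.+1 then ermin (ent s p') + ew (ent s p') else 0 + 1)
                (ermax (ent s p)) t0x in
  take p s ++ newe :: map (bump wx) (drop p s).

(* Deletion step (nondeterministic choice of which e_i to delete),    *)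
(* with threshold t = t_j: del_step t s s' means that the while loop   *)
(* started in s can end in s'.                                         *)
Inductive del_step (t : nat) : summary -> summary -> Prop :=
| del_done s : (forall p, ~~ deletable t s p) -> del_step t s s
| del_more s p s' : deletable t s p -> del_step t (delete_seg t s p) s' ->
                    del_step t s s'.

(* Initial summary: only +oo, with rmin = rmax = 1 (rank W + 1 with     *)
(* W = 0), w = 1 and t_0 = 0.                                          *)
Definition init_summary : summary := [:: Entry None 1 1 1 0].

Definition num_type2 (t : nat) (s : summary) : nat :=
  count (fun p => ~~ (vband t s p > vband t s p.+1)) (iota 0 (size s).-1).

End WQS.

(* Stream: updates (xs i, ws i), i = 1, 2, ...                          *)
Definition Wsum (ws : nat -> nat) (k : nat) : nat := \sum_(1 <= i < k.+1) ws i.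

Definition tk {R : archiRealFieldType} (eps : R) (ws : nat -> nat) (k : nat) : nat :=
  Num.truncn (eps * (Wsum ws k)%:R).

Definition t0k {R : archiRealFieldType} (eps : R) (ws : nat -> nat) (k : nat) : nat :=
  Num.truncn (eps * ((Wsum ws k.-1).+1)%:R).

Definition GK_run {R : archiRealFieldType} {disp : Order.disp_t} {T : orderType disp}
  (eps : R) (xs : nat -> T) (ws : nat -> nat) (S : nat -> @summary disp T) : Prop :=
  S 0 = init_summary /\
  forall j, 0 < j ->
    del_step (tk eps ws j)
      (insert (S j.-1) (xs j) (ws j) (t0k eps ws j)) (S j).

(* Main.v *)
Require Import Defs.
From mathcomp Require Import all_boot all_order all_algebra.
From mathcomp Require Import zify ring lra.
Import Order.TTheory GRing.Theory Num.Theory.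

Definition fb (t a : nat) := 2 ^ a + t %% 2 ^ a.

Lemma fb_lt t a : fb t a < fb t a.+1.
Proof.
rewrite /fb; have := ltn_pmod t (expn_gt0 2 a); rewrite expnS; lia.
Qed.

Lemma fb_mono t a b : a <= b -> fb t a <= fb t b.
Proof.
move=> ab; apply: (@homo_leq _ (fb t) leq) => //; first exact: leq_trans.
by move=> n; apply: ltnW; apply: fb_lt.
Qed.

Lemma band_le t x b : x <= t -> (band t x <= b) = (t - x < fb t b).
Proof.
move=> xt; rewrite /band; case: eqP => [<-|ne].
  by rewrite subnn /fb; have := expn_gt0 2 b; lia.
set d := t - x.
have d0 : 0 < d by rewrite /d; lia.
have ex : forall n, d < fb t n -> has (band_cond t d) (iota 0 n).
  elim=> [|n IH]; first by rewrite /fb expn0 modn1; lia.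
  move=> h; rewrite -addn1 iotaD has_cat /=; case: (ltnP d (fb t n)) => h2.
    by rewrite IH.
  by rewrite /band_cond h2 h orbT.
have hd : has (band_cond t d) (iota 0 d).
  apply: ex; rewrite /fb; have := ltn_expl d (isT : 1 < 2); lia.
have af : find (band_cond t d) (iota 0 d) < d.
  by have := hd; rewrite has_find size_iota.
have := nth_find 0 hd; rewrite nth_iota // add0n.
rewrite /band_cond -/(fb t _) -/(fb t _).
set a := find _ _ => /andP [h1 h2].
apply/idP/idP => [ab|db].
  idtac.
  by have := fb_mono t _ _ ab; lia.
rewrite ltnNge; apply/negP => ba.
have := fb_mono t _ _ ba; lia.
Qed.

Definition cdiv (x m : nat) := (x + m.-1) %/ m.

Lemma band_le2 t x b : x <= t -> (band t x <= b) = (t %/ 2 ^ b <= cdiv x (2 ^ b)).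
Proof.
move=> xt; rewrite band_le // /cdiv leq_divRL ?expn_gt0 // /fb.
have := divn_eq t (2 ^ b); have := expn_gt0 2 b.
set m := 2 ^ b; set q := t %/ m; set r := t %% m.
lia.
Qed.

Lemma band0 t x : (band t x == 0) = (t == x).
Proof. by rewrite /band; have [_|h] := eqVneq t x. Qed.

Lemma cdiv_mono m x y : x <= y -> cdiv x m <= cdiv y m.
Proof. by move=> xy; apply: leq_div2r; lia. Qed.

Lemma cdiv_nest x m h : 0 < m -> 0 < h -> cdiv (cdiv x m) h = cdiv x (m * h).
Proof.
move=> m0 h0; rewrite /cdiv; case: x => [|y].
  have z : forall n, 0 < n -> (0 + n.-1) %/ n = 0.
    by move=> n n0; rewrite add0n divn_small //; lia.
  by rewrite !z // muln_gt0 m0.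
have e : forall z n, 0 < n -> (z.+1 + n.-1) %/ n = (z %/ n).+1.
  move=> z n n0; rewrite (_ : z.+1 + n.-1 = z + 1 * n); last lia.
  by rewrite divnDr ?dvdn_mull // mulnK // addn1.
by rewrite e // e // e ?muln_gt0 ?m0 // divnMA.
Qed.

Lemma band_anti t x y : x <= y -> y <= t -> band t y <= band t x.
Proof.
move=> xy yt; rewrite band_le2 //.
have := leqnn (band t x); rewrite {1}band_le2; last lia.
move=> h; apply: leq_trans h _; exact: cdiv_mono.
Qed.

Lemma band_time t t' x : x <= t -> t <= t' -> band t x <= band t' x.
Proof.
move=> xt tt'; rewrite band_le2 //.
have := leqnn (band t' x); rewrite {1}band_le2; last lia.
move=> h; apply: leq_trans _ h; exact: leq_div2r.
Qed.

Lemma band_cons t t' a b : a <= t -> b <= t -> t <= t' ->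
  band t a <= band t b -> band t' a <= band t' b.
Proof.
move=> at_ bt tt' hab.
case: (leqP b a) => ba; first by apply: band_anti; lia.
case Eb: (band t b) hab => [|g] hab.
  move/eqP: Eb; rewrite band0 => /eqP Eb.
  have : band t a == 0 by lia.
  rewrite band0 => /eqP; lia.
have H1 : t %/ 2 ^ g.+1 <= cdiv a (2 ^ g.+1) by rewrite -band_le2.
have H2 : cdiv b (2 ^ g) < t %/ 2 ^ g.
  rewrite ltnNge -band_le2 // Eb; lia.
have H3 : t %/ 2 ^ g <= 2 * (t %/ 2 ^ g.+1) + 1.
  rewrite (expnS 2 g) (mulnC 2 (2 ^ g)) divnMA; set n := t %/ 2 ^ g.
  have := divn_eq n 2; have := ltn_pmod n (isT : 0 < 2); lia.
have H4 : cdiv b (2 ^ g.+1) <= cdiv a (2 ^ g.+1).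
  have -> : cdiv b (2 ^ g.+1) = cdiv (cdiv b (2 ^ g)) 2.
    by rewrite cdiv_nest ?expn_gt0 // -expnSr.
  have h5 : cdiv b (2 ^ g) <= 2 * cdiv a (2 ^ g.+1) by lia.
  apply: leq_trans (cdiv_mono 2 _ _ h5) _.
  set n := cdiv a _; rewrite /cdiv.
  rewrite (_ : 2 * n + 2.-1 = 1 + n * 2); last lia.
  by rewrite divnDr ?dvdn_mull // mulnK // divn_small.
set b' := band t' b.
have gb : g.+1 <= b' by rewrite -Eb; apply: band_time.
rewrite band_le2; last lia.
have := leqnn b'; rewrite {1}/b' band_le2; last lia.
move=> h; apply: leq_trans h _.
rewrite -(subnKC gb) expnD -!cdiv_nest ?expn_gt0 //.
exact: cdiv_mono.
Qed.

Set Implicit Arguments. Unset Strict Implicit.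

Record inf := Inf { it0 : nat; iG : int; ig : int; iD : int; iw : nat }.
Definition di := Inf 0 0 0 0 0.

Section S.
Context {disp : Order.disp_t} {T : orderType disp}.
Local Notation entry := (@entry disp T).
Local Notation dentry := (@dentry disp T).

Definition endv (e : entry) : int := ((ermin e)%:Z + (ew e)%:Z - 1)%R.
Definition Fi (a b : entry) : inf :=
  Inf (et0 b) (endv b - endv a)%R ((ermin b)%:Z - endv a)%R
      ((ermax b)%:Z - (ermin b)%:Z)%R (ew b).
Definition info (s : seq entry) := pairmap Fi dentry s.

Lemma size_info s : size (info s) = size s.
Proof. exact: size_pairmap. Qed.

Lemma nth_info s q : q < size s ->
  nth di (info s) q = Fi (nth dentry (dentry :: s) q) (ent s q).
Proof. by move=> h; rewrite /info (nth_pairmap dentry). Qed.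

Lemma prev_endE s q : prev_end s q = endv (nth dentry (dentry :: s) q).
Proof. by case: q. Qed.

Lemma gvalE s q : q < size s -> gval s q = ig (nth di (info s) q).
Proof. by move=> h; rewrite nth_info // /gval prev_endE. Qed.

Lemma GvalE s q : q < size s -> Gval s q = iG (nth di (info s) q).
Proof. move=> h; rewrite /Gval gvalE // nth_info //= /endv; lia. Qed.

Lemma DvalE s q : q < size s -> Dval s q = iD (nth di (info s) q).
Proof. by move=> h; rewrite nth_info. Qed.

Lemma et0E s q : q < size s -> et0 (ent s q) = it0 (nth di (info s) q).
Proof. by move=> h; rewrite nth_info. Qed.

Lemma ewE s q : q < size s -> ew (ent s q) = iw (nth di (info s) q).
Proof. by move=> h; rewrite nth_info. Qed.

Lemma info_G s : all (fun x => iG x == ig x + (iw x)%:Z - 1)%R (info s).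
Proof.
rewrite /info; elim: s dentry => //= b s IH a; rewrite IH andbT /endv.
apply/eqP; lia.
Qed.

Lemma last_take (x : entry) s p : p <= size s -> last x (take p s) = nth x (x :: s) p.
Proof.
elim: s x p => [|y s IH] x [|p] //= h.
rewrite IH; last lia.
case: p h => [|p] h //=; apply: set_nth_default; lia.
Qed.

Definition rminx (s : seq entry) p : nat :=
  if p is p'.+1 then ermin (ent s p') + ew (ent s p') else 0 + 1.

Definition newe (s : seq entry) (x : T) w t0x p : entry :=
  Entry (Some x) w (rminx s p) (ermax (ent s p)) t0x.

Lemma rminxE s p : p <= size s -> ((rminx s p)%:Z = endv (nth dentry (dentry :: s) p) + 1)%R.
Proof. by case: p => [|p] h /=; rewrite /endv /ent /=; lia. Qed.

Lemma Fi_bump w a b : Fi (Defs.bump w a) (Defs.bump w b) = Fi a b.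
Proof. rewrite /Fi /endv /=; congr Inf; lia. Qed.

Lemma pm_bump w a l : pairmap Fi (Defs.bump w a) (map (Defs.bump w) l) = pairmap Fi a l.
Proof. by elim: l a => //= b l IH a; rewrite Fi_bump IH. Qed.

Lemma info_insert s x w t0x (p := find (key_gt x) s) :
  info (insert s x w t0x) =
  take p (info s) ++ Fi (nth dentry (dentry :: s) p) (newe s x w t0x p) :: drop p (info s).
Proof.
have ps : p <= size s by rewrite /p find_size.
rewrite /insert -/p /info pairmap_cat /=.
have Es : pairmap Fi dentry s = pairmap Fi dentry (take p s) ++ pairmap Fi (last dentry (take p s)) (drop p s).
  by rewrite -pairmap_cat cat_take_drop.
rewrite Es.
rewrite take_size_cat ?size_pairmap ?size_takel //.
rewrite drop_size_cat ?size_pairmap ?size_takel //.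
rewrite last_take //; congr (_ ++ _ :: _).
case E: (drop p s) => [|e l] //=.
rewrite pm_bump; congr (_ :: _).
rewrite /Fi /endv /=; congr Inf.
- have := rminxE ps; rewrite /endv /rminx; lia.
- have := rminxE ps; rewrite /endv /rminx; lia.
- lia.
Qed.

Lemma newi_props s x w t0x p : p <= size s ->
  let y := Fi (nth dentry (dentry :: s) p) (newe s x w t0x p) in
  [/\ it0 y = t0x, iw y = w, ig y = 1%R, (iG y = w%:Z)%R &
     (iD y = if (p < size s)%N then iD (nth di (info s) p) + ig (nth di (info s) p) - 1
             else - (rminx s p)%:Z)%R].
Proof.
move=> ps /=; have := rminxE ps; rewrite /endv /= => e; split => //; try lia.
case: ifP => h; last by rewrite /ent nth_default /= ?sub0r // leqNgt h.
rewrite nth_info //= /endv; lia.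
Qed.

Definition merge (x : inf) (S : int) := Inf (it0 x) (iG x + S)%R (ig x + S)%R (iD x) (iw x).

Lemma info_delete s a p : a <= p -> p.+1 < size s ->
  info (take a s ++ drop p.+1 s) =
  take a (info s) ++ merge (nth di (info s) p.+1)
     (\sum_(a <= q < p.+1) iG (nth di (info s) q))%R :: drop p.+2 (info s).
Proof.
move=> ap ps.
have tel : (\sum_(a <= q < p.+1) iG (nth di (info s) q) =
   endv (ent s p) - endv (nth dentry (dentry :: s) a))%R.
  rewrite (telescope_sumr_eq (fun q => endv (nth dentry (dentry :: s) q))); first by [].
    lia.
  move=> k /andP [_ kp]; rewrite nth_info /=; last lia.
  by [].
rewrite tel.
have E1 : s = take p.+1 s ++ ent s p.+1 :: drop p.+2 s.
  by rewrite -drop_nth ?cat_take_drop.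
have E2 : take p.+1 s = take a s ++ drop a (take p.+1 s).
  by rewrite -{1}(cat_take_drop a (take p.+1 s)) take_takel //; lia.
set e := ent s p.+1; set r := drop p.+2 s.
have D : drop p.+1 s = e :: r by rewrite (drop_nth dentry ps).
have P1 : pairmap Fi dentry (take p.+1 s) = pairmap Fi dentry (take a s) ++
    pairmap Fi (last dentry (take a s)) (drop a (take p.+1 s)).
  by rewrite -pairmap_cat -E2.
have P2 : info s = pairmap Fi dentry (take p.+1 s) ++
    Fi (last dentry (take p.+1 s)) e :: pairmap Fi e r.
  by rewrite /info -{1}(cat_take_drop p.+1 s) D pairmap_cat.
have P3 : info (take a s ++ drop p.+1 s) = pairmap Fi dentry (take a s) ++
    Fi (last dentry (take a s)) e :: pairmap Fi e r.
  by rewrite /info D pairmap_cat.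
have Tk : take a (info s) = pairmap Fi dentry (take a s).
  by rewrite P2 P1 -catA take_size_cat // size_pairmap size_takel //; lia.
have Dr : drop p.+2 (info s) = pairmap Fi e r.
  by rewrite P2 -cat_rcons drop_size_cat // size_rcons size_pairmap size_takel //; lia.
rewrite P3 Tk Dr.
rewrite !last_take; try lia.
congr (_ ++ _ :: _).
have -> : nth di (info s) p.+1 = Fi (ent s p) e by rewrite nth_info.
rewrite /merge /Fi /=; congr Inf; lia.
Qed.

End S.

Section Gen.
Variable A : Type.
Implicit Types (L : seq A) (P Q : pred A).

Lemma all_take_ P n L : all P L -> all P (take n L).
Proof. by rewrite -{1}(cat_take_drop n L) all_cat => /andP []. Qed.
Lemma all_drop_ P n L : all P L -> all P (drop n L).
Proof. by rewrite -{1}(cat_take_drop n L) all_cat => /andP []. Qed.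

Lemma eq_big_all L Q P1 P2 (f : A -> int) : all Q L -> (forall x, Q x -> P1 x = P2 x) ->
  (\sum_(x <- L | P1 x) f x = \sum_(x <- L | P2 x) f x)%R.
Proof.
elim: L => [|y L IH] /=; first by rewrite !big_nil.
move=> /andP [qy qL] h; rewrite !big_cons IH // h //.
Qed.

Lemma sum_ge0_all L Q P (f : A -> int) : all Q L -> (forall x, Q x -> 0 <= f x)%R ->
  (0 <= \sum_(x <- L | P x) f x)%R.
Proof.
elim: L => [|y L IH] /=; first by rewrite big_nil.
move=> /andP [qy qL] h; rewrite big_cons; case: ifP => _; last exact: IH.
by apply: addr_ge0; [apply: h | apply: IH].
Qed.

Lemma sum_mid (x0 : A) L a b (f : A -> int) : a <= b -> b <= size L ->
  (\sum_(x <- drop a (take b L)) f x = \sum_(a <= q < b) f (nth x0 L q))%R.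
Proof.
move=> ab bL; rewrite (big_nth x0) size_drop size_takel //.
rewrite -[X in (_ = \sum_(X <= _ < _) _)%R](add0n a) big_addn.
apply: eq_big_nat => i /andP [_ hi]; rewrite nth_drop nth_take; first by rewrite addnC.
lia.
Qed.
End Gen.

Definition Ok t (x : inf) : bool :=
  [&& (1 <= ig x)%R, (iD x <= (it0 x)%:Z)%R, (ig x + iD x <= (t.+1)%:Z)%R,
      it0 x <= t & 0 < iw x].

Definition MI t (L : seq inf) (Y : seq (nat * nat)) := forall b,
  (\sum_(x <- L | (band t (it0 x) <= b)%N) iG x <= \sum_(y <- Y | (band t y.1 <= b)%N) (y.2)%:Z)%R.

Lemma Ok_time t t' x : t <= t' -> Ok t x -> Ok t' x.
Proof.
move=> tt' /and5P [h1 h2 h3 h4 h5]; apply/and5P; split => //; last lia.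
apply: le_trans h3 _; rewrite lez_nat; lia.
Qed.

Lemma Ok_G t x : Ok t x -> (iG x == ig x + (iw x)%:Z - 1)%R -> (1 <= iG x)%R.
Proof. move=> /and5P [h1 h2 h3 h4 h5] /eqP ->; lia. Qed.

Lemma MI_time t t' L Y : t <= t' -> all (fun x => it0 x <= t) L ->
  all (fun y => y.1 <= t) Y -> MI t L Y -> MI t' L Y.
Proof.
move=> tt' hL hY H b.
case: (boolP (has (fun c => band t' c <= b) (iota 0 t.+1))) => hc.
  have ex : exists c, (c <= t) && (band t' c <= b).
    case/hasP: hc => c; rewrite mem_iota => /andP [_ ct] cb; exists c.
    by rewrite cb andbT; lia.
  case: (ex_minnP ex) => c /andP [ct cb] cmin.
  have key : forall x, x <= t -> (band t' x <= b) = (band t x <= band t c).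
    move=> x xt; apply/idP/idP => h.
      have cx : c <= x by apply: cmin; rewrite xt h.
      exact: band_anti.
    case: (leqP c x) => cx.
      apply: leq_trans (@band_anti t' c x cx _) cb; lia.
    apply: leq_trans (@band_cons t t' x c _ _ tt' h) cb => //; lia.
  have E1 := @eq_big_all _ L (fun x => it0 x <= t) (fun x => band t' (it0 x) <= b)
             (fun x => band t (it0 x) <= band t c) iG hL (fun x xt => key _ xt).
  have E2 := @eq_big_all _ Y (fun y => y.1 <= t) (fun y => band t' y.1 <= b)
             (fun y => band t y.1 <= band t c) (fun y : nat * nat => Posz y.2) hY (fun y yt => key _ yt).
  rewrite /= in E1 E2; rewrite E1 E2.
  exact: H.
have h0 : forall x, it0 x <= t -> (band t' (it0 x) <= b) = xpred0 x.
  move=> x xt /=; apply/negbTE; apply: contra hc => h.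
  by apply/hasP; exists (it0 x) => //; rewrite mem_iota; lia.
have E1 := @eq_big_all _ L (fun x => it0 x <= t) (fun x => band t' (it0 x) <= b) xpred0 iG hL h0.
rewrite /= in E1; rewrite E1 big_pred0 //.
apply: (@sum_ge0_all _ Y xpredT) => //; by apply/allP.
Qed.

Section S.
Context {disp : Order.disp_t} {T : orderType disp}.
Local Notation entry := (@entry disp T).
Local Notation dentry := (@dentry disp T).
Local Notation summary := (@summary disp T).

Definition Inv t (s : summary) (Y : seq (nat * nat)) :=
  [/\ all (Ok t) (info s), all (fun y => y.1 <= t) Y & MI t (info s) Y].

Lemma Ok_it0 t L : all (Ok t) L -> all (fun x => it0 x <= t) L.
Proof. by apply: sub_all => x /and5P []. Qed.

Lemma Inv_time t t' s Y : t <= t' -> Inv t s Y -> Inv t' s Y.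
Proof.
move=> tt' [hO hY hM]; split.
- by apply: sub_all hO => x; apply: Ok_time.
- by apply: sub_all hY => y /= h; lia.
- exact: MI_time tt' (Ok_it0 hO) hY hM.
Qed.

Lemma Inv_insert t t' s x w t0x Y : Inv t s Y -> t <= t0x -> t0x <= t' -> 0 < w ->
  Inv t' (insert s x w t0x) (rcons Y (t0x, w)).
Proof.
move=> hI h1 h2 w0; have tt' : t <= t' by lia.
have [hO hY hM] := hI; have [hO' hY' hM'] := Inv_time tt' hI.
set p := find (key_gt x) s.
have ps : p <= size s by rewrite /p find_size.
have [n1 n2 n3 n4 n5] := newi_props x w t0x ps.
rewrite /Inv info_insert -/p; split.
- rewrite all_cat /= all_take_ ?all_drop_ //= andbT.
  apply/and5P; split; rewrite ?n1 ?n2 ?n3 //.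
  + rewrite n5; case: ifP => h; last lia.
    have := all_nthP di hO p; rewrite size_info => /(_ h) /and5P [g1 g2 g3 g4 g5].
    apply: le_trans (_ : (t%:Z <= _)%R); first lia.
    by rewrite lez_nat.
  + rewrite n5; case: ifP => h; last lia.
    have := all_nthP di hO p; rewrite size_info => /(_ h) /and5P [g1 g2 g3 g4 g5].
    lia.
- by rewrite -cats1 all_cat hY' /= h2.
- move=> b; have := hM' b.
  rewrite -{1}(cat_take_drop p (info s)) !big_cat big_cons -cats1 big_cat.
  rewrite big_cons big_nil n1 n4 /=; move=> H; case: ifP => _; last by rewrite addr0.
  by rewrite addr0 addrCA [X in (_ <= X)%R]addrC lerD2l.
Qed.

Lemma seglen_le t (s : summary) p : seglen t s p <= p.
Proof.
rewrite /seglen; apply: leq_trans (find_size _ _) _.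
by rewrite size_rev size_take; case: ifP => // /negbT; rewrite -leqNgt.
Qed.

Lemma seg_band t (s : summary) p q : p < size s -> p - seglen t s p <= q -> q < p ->
  band t (et0 (ent s q)) < vband t s p.
Proof.
move=> ps h1 h2.
have hi : p.-1 - q < seglen t s p by have := seglen_le t s p; lia.
have := before_find dentry hi.
rewrite nth_rev; last by rewrite size_take ps; lia.
rewrite size_take ps nth_take; last lia.
rewrite (_ : p - (p.-1 - q).+1 = q); last lia.
by move/negbFE.
Qed.

Lemma GstarE t (s : summary) p : p < size s ->
  Gstar t s p = (\sum_(p - seglen t s p <= q < p.+1) iG (nth di (info s) q))%R.
Proof.
move=> ps; rewrite /Gstar big_nat_recr /=; last lia.
rewrite addrC GvalE //; congr (_ + _)%R.
apply: eq_big_nat => q /andP [_ h]; apply: GvalE; lia.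
Qed.

Lemma Inv_delete t (s : summary) p Y : Inv t s Y -> deletable t s p -> Inv t (delete_seg t s p) Y.
Proof.
case=> hO hY hM /and3P [ps hv hd].
have ap : p - seglen t s p <= p by lia.
rewrite /Inv /delete_seg (info_delete ap ps).
set a := p - seglen t s p.
set I := info s.
set S := (\sum_(a <= q < p.+1) iG (nth di I q))%R.
set z := nth di I p.+1.
have sI : size I = size s by rewrite size_info.
have Oq : forall q, q < size s -> Ok t (nth di I q).
  by move=> q qs; apply: (all_nthP di hO); rewrite sI.
have Gq : forall q, q < size s -> (1 <= iG (nth di I q))%R.
  move=> q qs; apply: Ok_G (Oq q qs) _.
  by apply: (all_nthP di (info_G s)); rewrite sI.
have S0 : (0 <= S)%R.
  rewrite /S big_nat_cond; apply: sumr_ge0 => q /andP [/andP [_ h] _].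
  have := Gq q (leq_trans h (ltnW ps)); lia.
have hd' : (S + ig z + iD z <= t%:Z)%R.
  by move: hd; rewrite GstarE ?gvalE ?DvalE //; lia.
have Oz : Ok t z := Oq _ ps.
have hOI : all (Ok t) I := hO.
have hMI : MI t I Y := hM.
have hGI : all (fun x => (iG x == ig x + (iw x)%:Z - 1)%R) I := info_G s.
have [mid Emid Emid2] : exists2 mid, I = take a I ++ mid ++ z :: drop p.+2 I &
     mid = drop a (take p.+1 I).
  exists (drop a (take p.+1 I)) => //.
  rewrite catA -(take_takel _ (_ : a <= p.+1)); last lia.
  rewrite (cat_take_drop a) -{1}(cat_take_drop p.+1 I); congr (_ ++ _).
  by rewrite (drop_nth di) // sI.
have Omid : all (Ok t) mid by rewrite Emid2 all_drop_ ?all_take_.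
have Bmid : all (fun x => band t (it0 x) <= band t (it0 z)) mid.
  apply/(all_nthP di) => i; rewrite Emid2 size_drop size_takel; last by rewrite sI; lia.
  move=> hi; rewrite nth_drop nth_take; last lia.
  rewrite -et0E; last lia.
  rewrite /z -et0E //.
  case: (ltnP (a + i) p) => h.
    apply: ltnW; apply: leq_trans (seg_band _ _ _) hv => //; lia.
  by rewrite (_ : a + i = p) //; lia.
have Smid : (\sum_(x <- mid) iG x = S)%R.
  by rewrite Emid2 (sum_mid di) //; rewrite ?sI; lia.
clearbody S z I a. split.
- rewrite all_cat /= all_take_ ?all_drop_ //= ?andbT.
  move/and5P: Oz => [g1 g2 g3 g4 g5]; apply/and5P; split => //=; lia.
- exact: hY.
- move=> b; have := hMI b; rewrite {1}Emid !big_cat /= !big_cons /=.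
  case: ifP => hb.
    have -> : (\sum_(x <- mid | (band t (it0 x) <= b)%N) iG x = S)%R.
      rewrite -Smid (@eq_big_all _ mid _ _ xpredT iG Bmid) ?big_filter //.
      by move=> x /= h; apply: leq_trans h hb.
    lia.
  have : (0 <= \sum_(x <- mid | (band t (it0 x) <= b)%N) iG x)%R.
    have OGmid : all (fun x => Ok t x && (iG x == ig x + (iw x)%:Z - 1)%R) mid.
      by rewrite all_predI Omid Emid2 all_drop_ ?all_take_.
    apply: (@sum_ge0_all _ mid _ (fun x => band t (it0 x) <= b) iG OGmid) => x /andP [Ox Gx].
    have := Ok_G Ox Gx; lia.
  move=> H0 H; apply: le_trans H; rewrite lerD2l lerDr; exact: H0.
Qed.

Lemma Inv_delstep t (s s' : summary) Y : del_step t s s' -> Inv t s Y ->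
  Inv t s' Y /\ (forall p, ~~ deletable t s' p).
Proof.
elim=> [s0 H|s0 p s1 hd _ IH] hI; first by [].
by apply: IH; apply: Inv_delete.
Qed.

End S.

Definition Yk {R : archiRealFieldType} (eps : R) ws k : seq (nat * nat) :=
  (0, 1) :: [seq (t0k eps ws j, ws j) | j <- iota 1 k].

Lemma WsumS ws k : Wsum ws k.+1 = Wsum ws k + ws k.+1.
Proof. by rewrite /Wsum big_nat_recr. Qed.

Section Run.
Variables (R : archiRealFieldType) (eps : R) (ws : nat -> nat).
Hypotheses (eps0 : (0 < eps)%R) (ws0 : forall i, 0 < ws i).

Lemma tk0 : tk eps ws 0 = 0.
Proof. by rewrite /tk /Wsum big_geq // mulr0 truncn0. Qed.

Lemma tk_t0k k : tk eps ws k <= t0k eps ws k.+1.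
Proof.
rewrite /tk /t0k /=; apply: le_truncn; rewrite ler_pM2l // ler_nat; lia.
Qed.

Lemma t0k_tk k : t0k eps ws k.+1 <= tk eps ws k.+1.
Proof.
rewrite /tk /t0k /=; apply: le_truncn; rewrite ler_pM2l // ler_nat WsumS.
have := ws0 k.+1; lia.
Qed.

Lemma tk_mono k k' : k <= k' -> tk eps ws k <= tk eps ws k'.
Proof.
move=> kk; apply: le_truncn; rewrite ler_pM2l // ler_nat /Wsum.
rewrite [X in _ <= X](@big_cat_nat _ _ _ k.+1) /= ?leq_addr //; lia.
Qed.

Lemma YkS k : Yk eps ws k.+1 = rcons (Yk eps ws k) (t0k eps ws k.+1, ws k.+1).
Proof.
have e : iota 1 k.+1 = rcons (iota 1 k) k.+1 by rewrite -cats1 -[k.+1]addn1 iotaD addnC.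
by rewrite /Yk e map_rcons rcons_cons. Qed.

Lemma run_inv disp (T : orderType disp) (xs : nat -> T) S :
  GK_run eps xs ws S -> forall k,
  Inv (tk eps ws k) (S k) (Yk eps ws k) /\ (forall p, ~~ deletable (tk eps ws k) (S k) p).
Proof.
case=> S0 HS; elim=> [|k [IH _]].
  rewrite S0 tk0; split.
    split => //=.
    move=> b; rewrite !big_cons !big_nil /=.
    by rewrite /endv /=; lia.
  by move=> p; apply/negP => /and3P [].
have := HS k.+1 isT => /= hd.
have hI := Inv_insert (xs k.+1) IH (tk_t0k k) (t0k_tk k) (ws0 k.+1).
rewrite -YkS in hI.
exact: Inv_delstep hd hI.
Qed.

End Run.

Lemma sum_if_const (l : seq nat) (r : pred nat) (c : int) :
  (\sum_(p <- l) (if r p then c else 0) = (count r l)%:Z * c)%R.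
Proof.
elim: l => [|x l IH]; first by rewrite big_nil mul0r.
rewrite big_cons IH /=; case: (r x) => /=; lia.
Qed.

Lemma sum_const_int (l : seq nat) (c : int) :
  (\sum_(p <- l) c = (size l)%:Z * c)%R.
Proof.
elim: l => [|x l IH]; first by rewrite big_nil mul0r.
rewrite big_cons IH /=; lia.
Qed.

Lemma count_le2 (l : seq nat) (r : pred nat) : uniq l ->
  (forall p p', p \in l -> p' \in l -> r p -> r p' -> p < p' -> p' = p.+1) ->
  count r l <= 2.
Proof.
move=> ul H.
have H2 : forall p p', p \in l -> p' \in l -> r p -> r p' -> p != p' ->
    (p' == p.+1) || (p == p'.+1).
  move=> p p' pl p'l rp rp' ne; case: (ltngtP p p') => h.
  - by rewrite (H p p') ?eqxx.
  - by rewrite (H p' p) ?eqxx ?orbT.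
  - by rewrite h eqxx in ne.
rewrite -size_filter; case E: (filter r l) => [|x1 [|x2 [|x3 f]]] //.
have uf : uniq (filter r l) by apply: filter_uniq.
have mem : forall y, y \in filter r l -> (y \in l) && r y by move=> y; rewrite mem_filter andbC.
rewrite E in uf mem.
move: uf => /= /andP [/norP [n12 /norP [n13 _]] /andP [/norP [n23 _] _]].
have := mem x1; rewrite inE eqxx => /(_ isT) /andP [l1 r1].
have := mem x2; rewrite !inE eqxx orbT => /(_ isT) /andP [l2 r2].
have := mem x3; rewrite !inE eqxx !orbT => /(_ isT) /andP [l3 r3].
have := H2 _ _ l1 l2 r1 r2 n12; have := H2 _ _ l1 l3 r1 r3 n13;
have := H2 _ _ l2 l3 r2 r3 n23.
move: n12 n13 n23; lia.
Qed.

Lemma range_sum (F : nat -> int) n a c : a <= c -> c <= n ->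
  (\sum_(0 <= q < n | ((a <= q) && (q < c))%N) F q = \sum_(a <= q < c) F q)%R.
Proof.
move=> ac cn.
rewrite [RHS](@big_nat_widen _ _ _ a c n) // [RHS](@big_nat_widenl _ _ _ a 0) //.
by apply: eq_bigl => i /=; rewrite andbC.
Qed.

Lemma band_gap t x b : x <= t -> band t x = b -> 2 ^ b <= 2 * (t - x) + 1.
Proof.
move=> xt; case: b => [|b] hb; first by rewrite expn0; lia.
have : ~~ (band t x <= b) by rewrite hb ltnn.
rewrite band_le // -ltnNge /fb expnS; lia.
Qed.

Section Count.
Context {disp : Order.disp_t} {T : orderType disp}.
Local Notation summary := (@summary disp T).

Lemma count_band t (s : summary) Y b : Inv t s Y -> (forall p, ~~ deletable t s p) ->
  ((count (fun p => ((vband t s p <= vband t s p.+1) && (vband t s p.+1 == b))%N)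
      (iota 0 (size s).-1))%:Z * (2 ^ b)%:Z
   <= 4 * \sum_(y <- Y | (band t y.1 <= b)%N) (y.2)%:Z)%R.
Proof.
case=> hO hY hM hnd.
set n := size s.
set P := filter (fun p => ((vband t s p <= vband t s p.+1) && (vband t s p.+1 == b))%N) (iota 0 n.-1).
have sI : size (info s) = n by rewrite size_info.
have Oq : forall q, q < n -> Ok t (nth di (info s) q).
  by move=> q qs; apply: (all_nthP di hO); rewrite sI.
have Gq0 : forall q, (0 <= iG (nth di (info s) q))%R.
  move=> q; case: (ltnP q n) => qn; last by rewrite nth_default ?sI.
  have := Ok_G (Oq q qn) (all_nthP di (info_G s) _ (_ : q < size (info s))).
  rewrite sI => /(_ qn); lia.
have memP : forall p, p \in P -> [/\ p.+1 < n, vband t s p <= vband t s p.+1 &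
                                   vband t s p.+1 = b].
  move=> p; rewrite mem_filter mem_iota => /andP [/andP [h1 /eqP h2] /andP [_ h3]].
  split => //; lia.
pose Rr p q := (p - seglen t s p <= q) && (q < p.+2).
have stepA : forall p, p \in P ->
    ((2 ^ b)%:Z <= 2 * \sum_(0 <= q < n | Rr p q) iG (nth di (info s) q))%R.
  move=> p /memP [pn hv hb].
  rewrite /Rr range_sum; try lia.
  rewrite big_nat_recr /=; last lia.
  rewrite -GstarE; last lia.
  have nd := hnd p; rewrite /deletable pn hv /= -ltNge in nd.
  rewrite gvalE ?DvalE // in nd.
  have Oz := Oq _ pn.
  have Gz := all_nthP di (info_G s) p.+1; rewrite sI in Gz; have {}Gz := Gz pn.
  move/eqP: Gz => Gz.
  move/and5P: Oz => [g1 g2 g3 g4 g5].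
  have : 2 ^ b <= 2 * (t - it0 (nth di (info s) p.+1)) + 1.
    by apply: band_gap g4 _; rewrite -et0E.
 rewrite -(ler_nat int) natrD natrM natrB //; lia.
have RB : forall p q, p \in P -> Rr p q -> band t (et0 (ent s q)) <= b.
  move=> p q /memP [pn hv hb] /andP [h1 h2].
  case: (ltngtP q p.+1) => h3.
  - case: (ltngtP q p) => h4.
    + apply: ltnW; rewrite -hb; apply: leq_trans (seg_band _ _ _) hv => //; lia.
    + lia.
    + by rewrite h4 -hb.
  - lia.
  - by rewrite h3 -hb.
have OV : forall p p' q, p \in P -> p' \in P -> Rr p q -> Rr p' q -> p < p' -> p' = p.+1.
  move=> p p' q pP p'P /andP [h1 h2] /andP [h3 h4] pp'.
  case: (ltngtP p' p.+1) => h5; [lia | | by []].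
  have [pn hv hb] := memP _ pP; have [p'n hv' hb'] := memP _ p'P.
  have := seg_band (_ : p' < size s) (_ : p' - seglen t s p' <= p.+1) (_ : p.+1 < p').
  rewrite /n in pn p'n; rewrite -/(vband t s p.+1) hb => /(_ _ _ h5).
  move=> /(_ _ _); lia.
have stepB : forall q, (\sum_(p <- P) (if Rr p q then iG (nth di (info s) q) else 0) <=
    if (band t (et0 (ent s q)) <= b)%N then 2 * iG (nth di (info s) q) else 0)%R.
  move=> q; rewrite sum_if_const.
  case: (boolP (has (Rr^~ q) P)).
    case/hasP => p pP Rp; rewrite (RB p q pP Rp).
    have c2 : count (Rr^~ q) P <= 2.
      apply: count_le2; first by apply: filter_uniq; apply: iota_uniq.
      by move=> p1 p2 h1 h2 r1 r2 lt; apply: (OV p1 p2 q).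
    apply: ler_wpM2r => //; rewrite lez_nat //.
  rewrite has_count -leqNgt leqn0 => /eqP ->; rewrite mul0r.
  by case: ifP => // _; apply: mulr_ge0.
rewrite -size_filter -/P.
have E1 : (\sum_(x <- info s | (band t (it0 x) <= b)%N) iG x =
    \sum_(0 <= q < n) (if (band t (et0 (ent s q)) <= b)%N then iG (nth di (info s) q) else 0))%R.
  rewrite (big_nth di) sI big_mkcond /=.
  by apply: eq_big_nat => q /andP [_ qn]; rewrite et0E.
have E2 : (\sum_(0 <= q < n) (if (band t (et0 (ent s q)) <= b)%N then 2 * iG (nth di (info s) q) else 0) =
    2 * \sum_(0 <= q < n) (if (band t (et0 (ent s q)) <= b)%N then iG (nth di (info s) q) else 0))%R.
  rewrite mulr_sumr; apply: eq_bigr => q _; case: ifP => _ //; by rewrite mulr0.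
have E3 : (\sum_(p <- P) \sum_(0 <= q < n | Rr p q) iG (nth di (info s) q) =
    \sum_(0 <= q < n) \sum_(p <- P) (if Rr p q then iG (nth di (info s) q) else 0))%R.
  rewrite (exchange_big _ _ _ (fun p => true)) /=.
  by under eq_bigr do rewrite big_mkcond.
have H1 := hM b.
apply: (@le_trans _ _ (2 * \sum_(p <- P) \sum_(0 <= q < n | Rr p q) iG (nth di (info s) q))%R).
  rewrite -sum_const_int mulr_sumr big_seq [X in (_ <= X)%R]big_seq.
  by apply: ler_sum => p pP; apply: stepA.
rewrite E3.
apply: (@le_trans _ _ (2 * \sum_(0 <= q < n) (if (band t (et0 (ent s q)) <= b)%N then 2 * iG (nth di (info s) q) else 0))%R).
  by rewrite ler_pM2l //; apply: ler_sum => q _; apply: stepB.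
rewrite E2 -E1 mulrA (_ : (2 * 2 = 4 :> int)%R) //.
by rewrite ler_pM2l.
Qed.

End Count.

Section YB.
Variables (R : archiRealFieldType) (eps : R) (ws : nat -> nat).
Hypotheses (eps0 : (0 < eps)%R) (ws0 : forall i, 0 < ws i).

Lemma t0k_le j k : 0 < j -> j <= k -> t0k eps ws j <= tk eps ws k.
Proof.
move=> j0 jk; case: j j0 jk => // j _ jk.
apply: leq_trans (t0k_tk eps0 ws0 j) (tk_mono ws eps0 jk).
Qed.

Lemma fb_lt2 t b : fb t b < 2 ^ b.+1.
Proof. rewrite /fb expnS; have := ltn_pmod t (expn_gt0 2 b); lia. Qed.

Lemma SJ_bound k b :
  ((\sum_(j <- iota 1 k | (band (tk eps ws k) (t0k eps ws j) <= b)%N) ws j)%:R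
     <= (2 ^ b.+1)%:R / eps + 1 :> R)%R.
Proof.
set t := tk eps ws k; set M := 2 ^ b.+1.
set SJ := (\sum_(j <- iota 1 k | _) ws j)%N.
have Mpos : (0 <= (M%:R : R) / eps)%R by apply: divr_ge0 => //; apply: ltW.
case: (boolP (has (fun j => band t (t0k eps ws j) <= b) (iota 1 k))) => hc; last first.
  have -> : SJ = 0.
    rewrite /SJ big_seq_cond big_pred0 // => j; apply/negbTE; apply/negP => /andP [jI jb].
    by move/hasP: hc; apply; exists j.
  rewrite /=; lra.
have ex : exists j, (j \in iota 1 k) && (band t (t0k eps ws j) <= b).
  by case/hasP: hc => j jI jb; exists j; rewrite jI.
case: (ex_minnP ex) => j0 /andP [j0I j0b] j0min.
move: j0I; rewrite mem_iota => /andP [j01 j0k]; rewrite add1n ltnS in j0k.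
have eSJ : SJ = (\sum_(j0 <= j < k.+1 | band t (t0k eps ws j) <= b) ws j)%N.
  rewrite /SJ (_ : iota 1 k = index_iota 1 k.+1); last by rewrite /index_iota subSS subn0.
  rewrite (@big_cat_nat _ _ _ j0 1 k.+1) //=; last lia.
  rewrite big_nat_cond big1 ?add0n // => j /andP [/andP [h1 h2] h3].
  have := j0min j; rewrite mem_iota h3 andbT.
  have -> : (1 <= j < 1 + k) by lia.
  by move=> /(_ isT); lia.
have hW : Wsum ws k = (Wsum ws j0.-1 + \sum_(j0 <= j < k.+1) ws j)%N.
  rewrite /Wsum (@big_cat_nat _ _ _ j0 1 k.+1) //=; last lia.
  by rewrite (_ : j0.-1.+1 = j0) //; lia.
have hSJ : SJ + Wsum ws j0.-1 <= Wsum ws k.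
  rewrite hW eSJ addnC leq_add2l big_mkcond /=; apply: leq_sum => j _; case: ifP => //.
have h1 : t.+1 <= t0k eps ws j0 + M.
  have := j0b; rewrite band_le; last by apply: t0k_le => //; lia.
  have := fb_lt2 t b; rewrite -/M; lia.
have h2 : ((t0k eps ws j0)%:R <= eps * (Wsum ws j0.-1).+1%:R :> R)%R.
  rewrite /t0k truncn_le; apply: mulr_ge0 => //; exact: ltW.
have h3 : (eps * (Wsum ws k)%:R < t.+1%:R :> R)%R by rewrite /t /tk; apply: truncnS_gt.
have h4 : (eps * SJ%:R + eps * (Wsum ws j0.-1)%:R <= eps * (Wsum ws k)%:R :> R)%R.
  by rewrite -mulrDr ler_pM2l // -natrD ler_nat.
have h5 : ((t.+1)%:R <= (t0k eps ws j0)%:R + M%:R :> R)%R by rewrite -natrD ler_nat.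
rewrite -lerBlDr ler_pdivlMr //.
move: h2 h3 h4 h5; rewrite -!natr1; lra.
Qed.

End YB.

Lemma count_split_le (l : seq nat) (Q : pred nat) (f : nat -> nat) B :
  (forall p, p \in l -> f p <= B) ->
  count Q l <= \sum_(b < B.+1) count (fun p => Q p && (f p == b)) l.
Proof.
elim: l => [|x l IH] H //=.
rewrite big_split /= leq_add //; last by apply: IH => p pl; apply: H; rewrite inE pl orbT.
case: (Q x) => //=.
have fx : f x < B.+1 by rewrite ltnS; apply: H; rewrite inE eqxx.
rewrite (bigD1 (Ordinal fx)) //= eqxx; exact: leq_addr.
Qed.

Lemma sumz_nat (l : seq (nat * nat)) (P : pred (nat * nat)) :
  (\sum_(y <- l | P y) (y.2)%:Z = (\sum_(y <- l | P y) y.2)%N%:Z)%R.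
Proof.
elim: l => [|y l IH]; first by rewrite !big_nil.
by rewrite !big_cons; case: (P y) => //; rewrite IH PoszD.
Qed.

Lemma band_le_B t x : x <= t -> band t x <= (trunc_log 2 t).+1.
Proof.
move=> xt; case E: (band t x) => [|c] //.
have := band_gap xt E; rewrite expnS => h.
rewrite ltnS; apply: trunc_log_max => //; lia.
Qed.

Lemma cb_bound (R : archiRealFieldType) disp (T : orderType disp) (eps : R) ws
   (s : @summary disp T) k b :
  (0 < eps)%R -> (eps < 1)%R -> (forall i, 0 < ws i) ->
  Inv (tk eps ws k) s (Yk eps ws k) -> (forall p, ~~ deletable (tk eps ws k) s p) ->
  ((count (fun p => ((vband (tk eps ws k) s p <= vband (tk eps ws k) s p.+1) &&
                    (vband (tk eps ws k) s p.+1 == b))%N) (iota 0 (size s).-1))%:R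
     <= 16%:R * eps^-1 :> R)%R.
Proof.
move=> eps0 eps1 ws0 hI hnd.
set t := tk eps ws k in hI hnd *.
set c := count _ _.
have h1 := count_band b hI hnd.
rewrite sumz_nat -/c -PoszM in h1.
set SY := (\sum_(y <- Yk eps ws k | _) y.2)%N in h1.
have h1' : c * 2 ^ b <= 4 * SY.
  by rewrite -lez_nat PoszM.
have h2 : SY <= 1 + \sum_(j <- iota 1 k | band t (t0k eps ws j) <= b) ws j.
  rewrite /SY /Yk big_cons big_map /=; case: ifP => _ //.
have h3 := SJ_bound eps0 ws0 k b.
rewrite -/t in h3.
set SJ := (\sum_(j <- iota 1 k | _) ws j)%N in h2 h3.
have h4n : c * 2 ^ b <= 4 * (1 + SJ).
  apply: leq_trans h1' _; rewrite leq_mul2l /=; lia.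
have h4 : (c%:R * (2 ^ b)%:R <= 4%:R * (1 + SJ%:R) :> R)%R.
  by move: h4n; rewrite -(ler_nat R) !natrM natrD mulr1n.
set e := (eps^-1)%R.
have e1 : (1 <= e)%R by rewrite /e ltW // invf_gt1.
have P1 : (1 <= (2 ^ b)%:R :> R)%R by rewrite ler1n expn_gt0.
have Pe : (1 <= (2 ^ b)%:R * e :> R)%R by apply: mulr_ege1.
move: h3; rewrite expnS natrM -/e => h3.
rewrite -(ler_pM2r (_ : (0 < (2 ^ b)%:R :> R)%R)); last by lra.
move: h3 h4 Pe; set P := (((2 ^ b)%:R : R))%R; set C := ((c%:R : R))%R; set S' := ((SJ%:R : R))%R.
lra.
Qed.

Theorem mainTheorem9 :
  exists C : nat,
  forall (R : archiRealFieldType) (disp : Order.disp_t) (T : orderType disp)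
         (eps : R) (xs : nat -> T) (ws : nat -> nat) (S : nat -> @summary disp T)
         (k : nat),
    (0 < eps)%R -> (eps < 1)%R ->
    (forall i, 0 < ws i) ->
    GK_run eps xs ws S ->
    ((num_type2 (tk eps ws k) (S k))%:R
      <= C%:R * eps^-1 * (trunc_log 2 (tk eps ws k)).+1%:R :> R)%R.
Proof.
exists 32 => R disp T eps xs ws S k eps0 eps1 ws0 hrun.
have [hI hnd] := run_inv eps0 ws0 hrun k.
have cb := fun b => cb_bound b eps0 eps1 ws0 hI hnd.
set t := tk eps ws k in hI hnd cb *; set s := S k in hI hnd cb *.
set B := (trunc_log 2 t).+1.
have vB : forall p, p \in iota 0 (size s).-1 -> vband t s p.+1 <= B.
  move=> p; rewrite mem_iota add0n => /andP [_ h].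
  have ps : p.+1 < size s by lia.
  apply: band_le_B; rewrite et0E //.
  have [hO _ _] := hI.
  by have := all_nthP di hO p.+1; rewrite size_info => /(_ ps) /and5P [].
set e := (eps^-1)%R in cb *.
apply: (@le_trans _ _ (\sum_(b < B.+1) (count (fun p => ((vband t s p <= vband t s p.+1) &&
                    (vband t s p.+1 == b))%N) (iota 0 (size s).-1))%:R)%R).
  rewrite -natr_sum ler_nat /num_type2.
  apply: leq_trans (count_split_le _ vB).
  by apply: eq_leq; apply: eq_count => p; rewrite -leqNgt.
apply: (@le_trans _ _ (\sum_(b < B.+1) (16%:R * e))%R).
  by apply: ler_sum => b _; apply: cb.
rewrite sumr_const card_ord -(mulr_natr (16%:R * e)) /B.
have e0 : (0 <= e)%R by rewrite /e invr_ge0 ltW.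
have eL : (0 <= e * (trunc_log 2 t)%:R)%R by apply: mulr_ge0.
have E1 : ((trunc_log 2 t).+2%:R = (trunc_log 2 t)%:R + 1 + 1 :> R)%R by rewrite -!natr1.
have E2 : ((trunc_log 2 t).+1%:R = (trunc_log 2 t)%:R + 1 :> R)%R by rewrite -!natr1.
rewrite E1 E2; move: eL; set L := ((trunc_log 2 t)%:R : R)%R.
lra.
Qed.
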